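(* Given $\alpha>0$ there exists $C>0$ such that for every $\rho>0$ and every $u\in C((-\rho,\rho))$, $$\ell^\alpha(\rho)\sup_{\varepsilon\in(0,\rho)}\ell^{-\alpha}(\varepsilon)\|\delta_\varepsilon u\|_{L^\infty(-\rho,\rho-\varepsilon)}\le C\Big(\operatorname{osc}_{(-\rho,\rho)}u+\ell^\alpha(\rho)\sup_{\varepsilon\in(0,\rho)}\ell^{-\alpha}(\varepsilon)\|\delta^2_\varepsilon u\|_{L^\infty(-\rho,\rho-2\varepsilon)}\Big),$$ where norms over empty intervals are interpreted as $0$.
   Context: $\ell(\rho):=|\ln(\min\{\rho,1/10\})|^{-1}$ for $\rho>0$. $\delta_\varepsilon u(x):=u(x+\varepsilon)-u(x)$ and $\delta^2_\varepsilon u(x):=u(x+2\varepsilon)-2u(x+\varepsilon)+u(x)$. $\operatorname{osc}_Eu:=\sup_Eu-\inf_Eu$. *)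

(* Defs.v *)
From HB Require Import structures.
From mathcomp Require Import all_boot all_order all_algebra.
From mathcomp Require Import all_classical all_reals all_analysis.
Set Implicit Arguments. Unset Strict Implicit. Unset Printing Implicit Defensive.
Import Order.TTheory GRing.Theory Num.Theory.
Import numFieldNormedType.Exports.
Local Open Scope classical_set_scope.
Local Open Scope ring_scope.

Definition ell {R : realType} (rho : R) : R := (`| ln (Num.min rho (10^-1)) |)^-1.

Definition delta1 {R : realType} (eps : R) (u : R -> R) (x : R) : R :=
  u (x + eps) - u x.
Definition delta2 {R : realType} (eps : R) (u : R -> R) (x : R) : R :=
  u (x + 2 * eps) - 2 * u (x + eps) + u x.

(* sup norm of f over the open interval (a,b), with value 0 over an empty
   interval (0 is adjoined to the set of values; since |f| >= 0 this only
   matters when the interval is empty). Possibly +oo. *)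
Definition supnorm {R : realType} (f : R -> R) (a b : R) : \bar R :=
  ereal_sup (0%E |` [set (`| f x |)%:E | x in `]a, b[]).

Definition osc {R : realType} (u : R -> R) (a b : R) : \bar R :=
  (ereal_sup [set (u x)%:E | x in `]a, b[] - ereal_inf [set (u x)%:E | x in `]a, b[])%E.

Definition wsup {R : realType} (alpha rho : R) (k : R)
    (D : R -> (R -> R) -> R -> R) (u : R -> R) : \bar R :=
  ereal_sup [set (((ell eps) `^ (- alpha))%:E * supnorm (D eps u) (- rho) (rho - k * eps))%E
            | eps in `]0, rho[].

(* Main.v *)
Require Import Defs.
From HB Require Import structures.
From mathcomp Require Import all_boot all_order all_algebra.
From mathcomp Require Import all_classical all_reals all_analysis.
From mathcomp Require Import lra ring.
Import Order.TTheory GRing.Theory Num.Theory.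
Import numFieldNormedType.Exports.
Local Open Scope classical_set_scope.
Local Open Scope ring_scope.

Definition mn {R : realType} (t : R) : R := Num.min t 10^-1.
Definition mlog {R : realType} (t : R) : R := `| ln (mn t) |.
Definition lam {R : realType} (a t : R) : R := ell t `^ a.

Lemma ten_gt1 {R : realType} : (1 : R) < 10. Proof. by rewrite ltr1n. Qed.

Lemma mn_gt0 {R : realType} (t : R) : 0 < t -> 0 < mn t.
Proof. by move=> ht; rewrite /mn lt_min; apply/andP; split => //; rewrite invr_gt0 ltr0n. Qed.

Lemma mn_le {R : realType} (t : R) : mn t <= 10^-1.
Proof. by rewrite /mn ge_min lexx orbT. Qed.

Lemma mlogE {R : realType} (t : R) : 0 < t -> mlog t = - ln (mn t).
Proof.
move=> ht; rewrite /mlog ltr0_norm //; apply: ln_lt0; rewrite mn_gt0 //=.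
apply: (le_lt_trans (mn_le t)); rewrite invf_lt1 ?ltr0n ?ltr1n //.
Qed.

Lemma mlog_ge {R : realType} (t : R) : 0 < t -> ln 10 <= mlog t.
Proof.
move=> ht; rewrite mlogE // -[ln 10]opprK lerN2 -lnV ?posrE //.
by rewrite ler_ln ?posrE ?mn_gt0 ?invr_gt0 ?ltr0n // mn_le.
Qed.

Lemma ln10_gt0 {R : realType} : (0:R) < ln 10.
Proof. by apply: ln_gt0; rewrite ltr1n. Qed.

Lemma mlog_gt0 {R : realType} (t : R) : 0 < t -> 0 < mlog t.
Proof. by move=> ht; have := mlog_ge t ht; have := @ln10_gt0 R; lra. Qed.

Lemma lamE {R : realType} (a t : R) : 0 < t -> lam a t = expR (- (a * ln (mlog t))).
Proof.
move=> ht; rewrite /lam /ell /powR.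
have hm := mlog_gt0 t ht.
rewrite ifN; last by rewrite invr_eq0 gt_eqF.
by rewrite lnV ?posrE // mulrN.
Qed.

Lemma lam_gt0 {R : realType} (a t : R) : 0 < t -> 0 < lam a t.
Proof. by move=> ht; rewrite lamE // expR_gt0. Qed.

Lemma mlog_scale {R : realType} (t s : R) : 0 < t -> 1 <= s ->
  mlog t <= mlog (s * t) + ln s.
Proof.
move=> ht hs.
have s0 : 0 < s by apply: lt_le_trans hs.
have st0 : 0 < s * t by apply: mulr_gt0.
have key : mn (s * t) <= s * mn t.
  rewrite /mn; have [h|h] := leP t 10^-1.
    by rewrite ge_min lexx.
  rewrite ge_min; apply/orP; right.
  lra.
have : ln (mn (s * t)) <= ln (s * mn t).
  have m1 := mn_gt0 _ st0; have m2 := mn_gt0 _ ht.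
  by rewrite ler_ln // posrE // mulr_gt0.
have m2 := mn_gt0 _ ht.
rewrite lnM ?posrE // !mlogE //; lra.
Qed.

Lemma Gln {R : realType} (b c y : R) : 0 < b -> 0 < c -> 0 <= y ->
  b * ln (1 + y) <= b * ln (b / c) + c + c * y.
Proof.
move=> b0 c0 y0.
have bc : 0 < b / c by rewrite divr_gt0.
have z0 : 0 < (1 + y) * (c / b) by rewrite mulr_gt0 ?divr_gt0 //; lra.
have E : 1 + y = (b / c) * ((1 + y) * (c / b)).
  by field; apply/andP; split; rewrite gt_eqF.
rewrite E lnM ?posrE //.
have : ln (1 + ((1 + y) * (c / b) - 1)) <= (1 + y) * (c / b) - 1.
  by apply: le_ln1Dx; lra.
rewrite addrC subrK => H.
have H2 : b * ln ((1 + y) * (c / b)) <= b * ((1 + y) * (c / b) - 1).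
  by rewrite ler_pM2l.
have E2 : b * ((1 + y) * (c / b) - 1) = c + c * y - b.
  by field; rewrite gt_eqF.
rewrite E2 in H2; rewrite mulrDr; lra.
Qed.

Lemma RL {R : realType} (a c t s : R) : 0 < a -> 0 < c -> 0 < t -> 1 <= s ->
  lam a (s * t) <= lam a t * expR (a * ln (a / c) + c) * expR (c * (ln s / ln 10)).
Proof.
move=> a0 c0 t0 s1.
have s0 : 0 < s by apply: lt_le_trans s1.
have st0 : 0 < s * t by apply: mulr_gt0.
rewrite !lamE // -!expRD ler_expR.
set y := ln s / ln 10.
have L0 := @ln10_gt0 R.
have y0 : 0 <= y by apply: divr_ge0; [exact: ln_ge0 | exact: ltW].
have m1 := mlog_scale t s t0 s1.
have m2 := mlog_ge _ st0.
have m3 : ln s = y * ln 10 by rewrite /y mulfVK ?gt_eqF.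
have m4 : mlog t <= mlog (s * t) * (1 + y).
  rewrite mulrDr mulr1; have : ln 10 * y <= mlog (s * t) * y by rewrite ler_wpM2r.
  lra.
have p1 := mlog_gt0 _ t0; have p2 := mlog_gt0 _ st0.
have m5 : ln (mlog t) <= ln (mlog (s * t)) + ln (1 + y).
  rewrite -lnM ?posrE //; last lra.
  by rewrite ler_ln // posrE mulr_gt0 //; lra.
have m6 : a * ln (mlog t) <= a * ln (mlog (s * t)) + a * ln (1 + y).
  by rewrite -mulrDr ler_pM2l.
have := Gln a c y a0 c0 y0.
lra.
Qed.

Lemma Fwd {R : realType} (a rho o w : R) (u : R -> R) :
  (forall x y : R, -rho < x < rho -> -rho < y < rho -> `|u x - u y| <= o) ->
  (forall e x : R, 0 < e < rho -> -rho < x -> x < rho - 2 * e ->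
     `|delta2 e u x| <= w * lam a e) ->
  forall k (eps x : R), 0 < eps -> -rho < x -> x + 2 ^+ k * eps < rho ->
  `|delta1 eps u x| <=
     (2^-1) ^+ k * o + w * \sum_(j < k) (2^-1) ^+ j.+1 * lam a (2 ^+ j * eps).
Proof.
move=> H1 H2; elim=> [|k IH] eps x e0 x0 hx.
  rewrite big_ord0 expr0 mulr0 addr0 mul1r /delta1.
  rewrite expr0 mul1r in hx.
  by apply: H1; apply/andP; split; lra.
have p : (1 : R) <= 2 ^+ k by rewrite exprn_ege1 // ler1n.
have q : 2 * eps <= 2 ^+ k.+1 * eps.
  rewrite exprSr ler_wpM2r ?(ltW e0) //; lra.
have IH' := IH (2 * eps) x (mulr_gt0 (ltr0n _ 2) e0) x0.
rewrite mulrA -exprSr in IH'; have {}IH' := IH' hx.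
have D2 := H2 eps x.
have {D2} D2 : `|delta2 eps u x| <= w * lam a eps.
  by apply: D2; first (apply/andP; split); lra.
have E : delta1 eps u x = 2^-1 * delta1 (2 * eps) u x - 2^-1 * delta2 eps u x.
  by rewrite /delta1 /delta2; field.
have N : `|delta1 eps u x| <= 2^-1 * `|delta1 (2 * eps) u x| + 2^-1 * `|delta2 eps u x|.
  rewrite E; apply: le_trans (ler_normB _ _) _.
  by rewrite !normrM ger0_norm // invr_ge0 ler0n.
rewrite big_ord_recl /= expr0 mul1r expr1.
have Es : \sum_(i < k) (2^-1) ^+ (bump 0 i).+1 * lam a (2 ^+ bump 0 i * eps)
   = 2^-1 * \sum_(j < k) (2^-1) ^+ j.+1 * lam a (2 ^+ j * (2 * eps)).
  rewrite mulr_sumr; apply: eq_bigr => i _; rewrite /bump leq0n add1n.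
  have -> : (2:R) ^+ i.+1 * eps = 2 ^+ i * (2 * eps) by rewrite exprSr mulrA.
  by rewrite [in LHS]exprS -mulrA.
rewrite Es exprS.
lra.
Qed.

Lemma Geo {R : realType} (q : R) (k : nat) : 0 <= q < 1 ->
  \sum_(j < k) q ^+ j <= (1 - q)^-1.
Proof.
case/andP=> q0 q1.
have E : (\sum_(j < k) q ^+ j) * (1 - q) = 1 - q ^+ k.
  elim: k => [|k IH]; first by rewrite big_ord0 expr0 mul0r subrr.
  by rewrite big_ord_recr /= mulrDl IH exprS; ring.
have h1 : (\sum_(j < k) q ^+ j) * (1 - q) <= 1.
  by rewrite E; have := exprn_ge0 k q0; lra.
have p : 0 < 1 - q by lra.
have -> : \sum_(j < k) q ^+ j = (\sum_(j < k) q ^+ j) * (1 - q) * (1 - q)^-1.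
  by rewrite mulfK // gt_eqF.
by rewrite -[X in _ <= X]mul1r ler_wpM2r // invr_ge0 ltW.
Qed.

Lemma Kex {R : realType} (rho : R) : forall N (eps : R), 0 < eps -> eps <= rho ->
  rho < 2 ^+ N * eps -> exists k, 2 ^+ k * eps <= rho /\ rho < 2 ^+ k.+1 * eps.
Proof.
elim=> [|N IH] eps e0 er hr.
  by rewrite expr0 mul1r in hr; lra.
have [h|h] := ltP rho (2 * eps).
  by exists 0%N; rewrite expr0 mul1r expr1.
have e2 : 0 < 2 * eps by lra.
have hr2 : rho < 2 ^+ N * (2 * eps) by rewrite mulrA -exprSr.
have [k [k1 k2]] := IH _ e2 h hr2.
by exists k.+1; rewrite exprSr -mulrA exprSr -(mulrA _ 2).
Qed.

Lemma Kex2 {R : realType} (rho eps : R) : 0 < eps -> eps <= rho ->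
  exists k, 2 ^+ k * eps <= rho /\ rho < 2 ^+ k.+1 * eps.
Proof.
move=> e0 er.
have x0 : 0 <= rho / eps by rewrite divr_ge0 // ltW // (lt_le_trans e0).
set n := Num.Def.archi_bound (rho / eps).
have h1 := archi_boundP x0.
have h2 : (n%:R : R) <= 2 ^+ n.
  by rewrite -natrX ler_nat ltnW // ltn_expl.
apply: (Kex rho n eps) => //.
rewrite -ltr_pdivrMr //; lra.
Qed.

Definition K1 {R : realType} (a : R) := expR (a * ln (a / ln 10) + ln 10).
Definition K2 {R : realType} (a : R) := expR (a * ln (a / (ln 10 / 2)) + ln 10 / 2).
Definition PP {R : realType} : R := expR (ln 2 / 2).
Definition CC {R : realType} (a : R) := 2 * K1 a + K2 a * 2^-1 * (1 - PP / 2)^-1.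

Lemma PP_bnd {R : realType} : 0 <= (PP : R) / 2 < 1.
Proof.
have l2 : (0 : R) < ln 2 by apply: ln_gt0; rewrite ltr1n.
have p0 : (0 : R) < PP by rewrite expR_gt0.
have p2 : (PP : R) < 2.
  have -> : (2 : R) = expR (ln 2) by rewrite lnK // posrE.
  by rewrite ltr_expR; lra.
by apply/andP; split; lra.
Qed.

Lemma SumB {R : realType} (a eps : R) (k : nat) : 0 < a -> 0 < eps ->
  \sum_(j < k) (2^-1) ^+ j.+1 * lam a (2 ^+ j * eps)
  <= lam a eps * (K2 a * 2^-1 * (1 - PP / 2)^-1).
Proof.
move=> a0 e0.
have L0 := @ln10_gt0 R.
have c0 : 0 < ln 10 / 2 :> R by lra.
have le0 := lam_gt0 a eps e0.
have k20 : 0 < K2 a by rewrite expR_gt0.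
have H : \sum_(j < k) (2^-1) ^+ j.+1 * lam a (2 ^+ j * eps)
   <= \sum_(j < k) (lam a eps * K2 a * 2^-1) * (PP / 2) ^+ j.
  apply: ler_sum => i _.
  have := RL a (ln 10 / 2) eps (2 ^+ i) a0 c0 e0 (exprn_ege1 _ (ler1n _ 2)).
  rewrite lnXn //.
  have -> : ln 10 / 2 * (ln 2 *+ i / ln 10) = i%:R * (ln 2 / 2) :> R.
    by rewrite -mulr_natr; field; rewrite mul1r gt_eqF.
  rewrite expRM_natl -/PP -/(K2 a) => Hi.
  have X0 : 0 <= 2^-1 * (2^-1) ^+ i :> R by rewrite mulr_ge0 ?exprn_ge0 ?invr_ge0.
  rewrite exprS -mulrA.
  have -> : lam a eps * K2 a * 2^-1 * (PP / 2) ^+ i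
     = (2^-1 * (2^-1) ^+ i) * (lam a eps * K2 a * PP ^+ i).
    by rewrite exprMn; ring.
  by rewrite mulrA ler_wpM2l.
apply: le_trans H _.
rewrite -mulr_sumr.
have -> : lam a eps * (K2 a * 2^-1 * (1 - PP / 2)^-1)
   = (lam a eps * K2 a * 2^-1) * (1 - PP / 2)^-1 by ring.
apply: ler_wpM2l; first by rewrite !mulr_ge0 ?ltW ?invr_ge0 ?ler0n.
exact: Geo PP_bnd.
Qed.

Lemma Half {R : realType} (a rho o w : R) (u : R -> R) :
  0 < a -> 0 <= o -> 0 <= w ->
  (forall x y : R, -rho < x < rho -> -rho < y < rho -> `|u x - u y| <= o) ->
  (forall e x : R, 0 < e < rho -> -rho < x -> x < rho - 2 * e ->
     `|delta2 e u x| <= w * lam a e) ->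
  forall eps x : R, 0 < eps < rho -> -rho < x -> x < 0 ->
  lam a rho * `|delta1 eps u x| <= CC a * (o + lam a rho * w) * lam a eps.
Proof.
move=> a0 o0 w0 H1 H2 eps x /andP[e0 er] x0 xn.
have [k [k1 k2]] := Kex2 rho eps e0 (ltW er).
have r0 : 0 < rho by lra.
have h1 := Fwd a rho o w u H1 H2 k eps x e0 x0 (ltac:(lra)).
have h2 := SumB a eps k a0 e0.
set S := \sum_(j < k) _ in h1 h2.
set X := (2^-1 : R) ^+ k in h1.
set B := K2 a * 2^-1 * (1 - PP / 2)^-1 in h2.
have L0 := @ln10_gt0 R.
have h3 : lam a rho <= lam a eps * K1 a * (rho / eps).
  have s1 : 1 <= rho / eps by rewrite ler_pdivlMr // mul1r ltW.
  have := RL a (ln 10) eps (rho / eps) a0 L0 e0 s1.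
  rewrite divfK ?gt_eqF //.
  have -> : ln 10 * (ln (rho / eps) / ln 10) = ln (rho / eps).
    by field; rewrite gt_eqF.
  by rewrite lnK // posrE divr_gt0.
have Y0 : X * 2 ^+ k = 1 by rewrite /X -exprMn mulVf ?expr1n.
have X0 : 0 <= X by rewrite exprn_ge0 // invr_ge0 ler0n.
have h4 : rho / eps * X <= 2.
  rewrite exprSr in k2; rewrite mulrAC ler_pdivrMr //.
  have : rho * X <= 2 ^+ k * 2 * eps * X by rewrite ler_wpM2r // ltW.
  have -> : 2 ^+ k * 2 * eps * X = (X * 2 ^+ k) * (2 * eps) by ring.
  by rewrite Y0 mul1r.
have le0 := lam_gt0 a eps e0.
have lr0 := lam_gt0 a rho r0.
have k10 : 0 < K1 a by rewrite expR_gt0.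
have h5 : lam a rho * X <= 2 * K1 a * lam a eps.
  apply: le_trans (ler_wpM2r X0 h3) _.
  have -> : lam a eps * K1 a * (rho / eps) * X = (lam a eps * K1 a) * (rho / eps * X) by ring.
  have -> : 2 * K1 a * lam a eps = (lam a eps * K1 a) * 2 by ring.
  by apply: ler_wpM2l => //; apply: mulr_ge0; apply: ltW.
have g1 : lam a rho * `|delta1 eps u x| <= lam a rho * X * o + lam a rho * w * S.
  have := ler_wpM2l (ltW lr0) h1; lra.
have g2 : lam a rho * X * o <= 2 * K1 a * lam a eps * o by apply: ler_wpM2r.
have g3 : lam a rho * w * S <= lam a rho * w * (lam a eps * B).
  by apply: ler_wpM2l => //; apply: mulr_ge0 => //; apply: ltW.
have B0 : 0 <= B.
  rewrite /B; apply: mulr_ge0; first apply: mulr_ge0.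
  - exact: ltW (expR_gt0 _).
  - by rewrite invr_ge0 ler0n.
  - rewrite invr_ge0; case/andP: (@PP_bnd R) => _ h; lra.
have t1 : 0 <= B * o * lam a eps.
  by apply: mulr_ge0; [apply: mulr_ge0|apply: ltW].
have t2 : 0 <= K1 a * lam a rho * w * lam a eps.
  apply: mulr_ge0; [apply: mulr_ge0 => //; apply: mulr_ge0|]; exact: ltW.
rewrite /CC -/B; lra.
Qed.

Lemma Full {R : realType} (a rho o w : R) (u : R -> R) :
  0 < a -> 0 <= o -> 0 <= w ->
  (forall x y : R, -rho < x < rho -> -rho < y < rho -> `|u x - u y| <= o) ->
  (forall e x : R, 0 < e < rho -> -rho < x -> x < rho - 2 * e ->
     `|delta2 e u x| <= w * lam a e) ->
  forall eps x : R, 0 < eps < rho -> -rho < x -> x < rho - eps ->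
  lam a rho * `|delta1 eps u x| <= CC a * (o + lam a rho * w) * lam a eps.
Proof.
move=> a0 o0 w0 H1 H2 eps x he x0 x1.
have [xn|xp] := ltP x 0; first exact: Half.
pose v := fun t => u (- t).
have H1v : forall x y : R, -rho < x < rho -> -rho < y < rho -> `|v x - v y| <= o.
  move=> p q /andP[p1 p2] /andP[q1 q2]; apply: H1; apply/andP; split; lra.
have H2v : forall e x : R, 0 < e < rho -> -rho < x -> x < rho - 2 * e ->
     `|delta2 e v x| <= w * lam a e.
  move=> e p he2 p1 p2.
  have E : delta2 e v p = delta2 e u (- p - 2 * e).
    rewrite /delta2 /v.
    have e1 : u (- (p + 2 * e)) = u (- p - 2 * e) by congr u; ring.
    have e2 : u (- (p + e)) = u (- p - 2 * e + e) by congr u; ring.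
    have e3 : u (- p) = u (- p - 2 * e + 2 * e) by congr u; ring.
    rewrite e1 e2 e3; ring.
  by rewrite E; apply: H2 => //; lra.
have := Half a rho o w v a0 o0 w0 H1v H2v eps (- x - eps) he (ltac:(lra)) (ltac:(move/andP: he => [he1 he2]; lra)).
have -> : delta1 eps v (- x - eps) = - delta1 eps u x.
  rewrite /delta1 /v.
  have e1 : u (- (- x - eps + eps)) = u x by congr u; ring.
  have e2 : u (- (- x - eps)) = u (x + eps) by congr u; ring.
  rewrite e1 e2; ring.
by rewrite normrN.
Qed.

Lemma CC_gt0 {R : realType} (a : R) : 0 < CC a.
Proof.
rewrite /CC.
have k1 : 0 < K1 a by rewrite expR_gt0.
have B0 : 0 <= K2 a * 2^-1 * (1 - PP / 2)^-1.
  apply: mulr_ge0; first apply: mulr_ge0.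
  - exact: ltW (expR_gt0 _).
  - by rewrite invr_ge0 ler0n.
  - rewrite invr_ge0; case/andP: (@PP_bnd R) => _ h; lra.
lra.
Qed.

Lemma supnorm_ge0 {R : realType} (f : R -> R) a b : (0 <= supnorm f a b)%E.
Proof. by apply: ereal_sup_ubound; left. Qed.

Lemma supnorm_ge {R : realType} (f : R -> R) a b x : a < x -> x < b ->
  ((`|f x|)%:E <= supnorm f a b)%E.
Proof.
move=> h1 h2; apply: ereal_sup_ubound; right; exists x => //.
by rewrite /= in_itv /=; apply/andP.
Qed.

Lemma supnorm_le {R : realType} (f : R -> R) a b M : 0 <= M ->
  (forall x, a < x -> x < b -> `|f x| <= M) -> (supnorm f a b <= M%:E)%E.
Proof.
move=> M0 H; apply: ge_ereal_sup => z [->|[x hx <-]]; first by rewrite lee_fin.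
move: hx; rewrite /= in_itv /= => /andP[h1 h2].
by rewrite lee_fin H.
Qed.

Theorem lemma4p9 (R : realType) (alpha : R) :
  0 < alpha ->
  exists C : R, 0 < C /\
    forall (rho : R) (u : R -> R), 0 < rho ->
      {within `]- rho, rho[, continuous u} ->
      (((ell rho) `^ alpha)%:E * wsup alpha rho 1 delta1 u
       <= C%:E * (osc u (- rho) rho
                  + ((ell rho) `^ alpha)%:E * wsup alpha rho 2 delta2 u))%E.
Proof.
move=> a0; exists (CC alpha); split; first exact: CC_gt0.
move=> rho u r0 _.
have Lp : 0 < ell rho `^ alpha by exact: (lam_gt0 alpha rho r0).
set L := ell rho `^ alpha in Lp *.
have LE : L = lam alpha rho by [].
have Cp := CC_gt0 alpha.
set S := [set (u x)%:E | x in `]- rho, rho[].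
have uS : S (u 0)%:E.
  by exists 0 => //; rewrite /= in_itv /=; apply/andP; split; lra.
have supge : ((u 0)%:E <= ereal_sup S)%E := ereal_sup_ubound uS.
have infle : (ereal_inf S <= (u 0)%:E)%E := ereal_inf_lbound uS.
set W2 := wsup alpha rho 2 delta2 u.
have W2ge0 : (0 <= W2)%E.
  apply: ereal_sup_ge.
  exists (((ell (rho / 2)) `^ (- alpha))%:E * supnorm (delta2 (rho / 2) u) (- rho) (rho - 2 * (rho / 2)))%E.
    by exists (rho / 2) => //; rewrite /= in_itv /=; apply/andP; split; lra.
  by apply: mule_ge0; [rewrite lee_fin powR_ge0 | exact: supnorm_ge0].
have LW0 : (L%:E * W2 != -oo)%E.
  have : (0 <= L%:E * W2)%E by apply: mule_ge0 => //; rewrite lee_fin ltW.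
  by case: (L%:E * W2)%E.
have Yoo : forall o, o = +oo%E -> ((CC alpha)%:E * (o + L%:E * W2))%E = +oo%E.
  by move=> o ->; rewrite addye // mulry gtr0_sg // mul1e.
rewrite /osc -/S.
case Hs: (ereal_sup S) => [s| |]; last by rewrite Hs in supge.
2: by rewrite Yoo ?leey //; case: (ereal_inf S) infle => //.
case Hi: (ereal_inf S) => [i| |]; first last.
- by rewrite Yoo ?leey.
- by rewrite Hi in infle.
case Hw: W2 => [w| |]; first last.
- by rewrite Hw in W2ge0.
- by rewrite mulry gtr0_sg // mul1e addey // mulry gtr0_sg // mul1e leey.
rewrite Hs Hi in supge infle; rewrite lee_fin in supge infle.
rewrite Hw lee_fin in W2ge0.
set o := s - i.
rewrite lee_fin in infle.
have o0 : 0 <= o by rewrite /o; lra.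
have H1 : forall x y : R, -rho < x < rho -> -rho < y < rho -> `|u x - u y| <= o.
  move=> x y hx hy.
  have Sx : S (u x)%:E by exists x => //; rewrite /= in_itv.
  have Sy : S (u y)%:E by exists y => //; rewrite /= in_itv.
  have := ereal_sup_ubound Sx; have := ereal_sup_ubound Sy.
  have := ereal_inf_lbound Sx; have := ereal_inf_lbound Sy.
  rewrite Hs Hi !lee_fin => a1 a2 a3 a4.
  rewrite ler_norml /o; apply/andP; split; lra.
have H2 : forall e x : R, 0 < e < rho -> -rho < x -> x < rho - 2 * e ->
     `|delta2 e u x| <= w * lam alpha e.
  move=> e x he x0 x1.
  have Se : [set (((ell eps) `^ (- alpha))%:E * supnorm (delta2 eps u) (- rho) (rho - 2 * eps))%E
            | eps in `]0, rho[] (((ell e) `^ (- alpha))%:E * supnorm (delta2 e u) (- rho) (rho - 2 * e))%E.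
    by exists e => //; rewrite /= in_itv.
  have el := ereal_sup_ubound Se.
  rewrite -/(wsup alpha rho 2 delta2 u) -/W2 Hw in el.
  have e0 : 0 < e by case/andP: he.
  have le0 := lam_gt0 alpha e e0.
  have p0 : (0 <= ((ell e) `^ (- alpha))%:E)%E by rewrite lee_fin powR_ge0.
  have h := lee_wpmul2l p0 (supnorm_ge (delta2 e u) (- rho) (rho - 2 * e) x x0 x1).
  have := le_trans h el.
  rewrite -EFinM lee_fin powRN -/(lam alpha e) => hh.
  by rewrite -ler_pdivrMr // mulrC; exact: hh.
have w0 : 0 <= w by [].
have M0 : 0 <= CC alpha * (o + L * w) / L.
  apply: divr_ge0; last exact: ltW.
  apply: mulr_ge0; first exact: ltW.
  by apply: addr_ge0 => //; apply: mulr_ge0 => //; exact: ltW.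
have W1le : (wsup alpha rho 1 delta1 u <= (CC alpha * (o + L * w) / L)%:E)%E.
  apply: ge_ereal_sup => z [e he <-].
  move: he; rewrite /= in_itv /= => he.
  have e0 : 0 < e by case/andP: he.
  have le0 := lam_gt0 alpha e e0.
  have sn : (supnorm (delta1 e u) (- rho) (rho - 1 * e) <=
             (lam alpha e * (CC alpha * (o + L * w) / L))%:E)%E.
    apply: supnorm_le; first by apply: mulr_ge0 => //; exact: ltW.
    move=> x x0 x1.
    have := Full alpha rho o w u a0 o0 w0 H1 H2 e x he x0 (ltac:(lra)).
    rewrite -LE => hF.
    rewrite -(ler_pM2l Lp).
    have -> : L * (lam alpha e * (CC alpha * (o + L * w) / L))
       = CC alpha * (o + L * w) * lam alpha e by field; rewrite gt_eqF.
    exact: hF.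
  apply: le_trans (lee_wpmul2l _ sn) _; first by rewrite lee_fin powR_ge0.
  by rewrite -EFinM powRN -/(lam alpha e) mulKf ?gt_eqF.
apply: le_trans (lee_wpmul2l _ W1le) _; first by rewrite lee_fin ltW.
by rewrite -EFinM -EFinD -EFinM lee_fin mulrC divfK ?gt_eqF.
Qed.
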